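(* Let $M\in\mathbb R^{n\times n}$ be sufficient, $B$ a complementary basis with dictionary $D$, and let $i,j\in B$ be distinct such that $B'=(B\setminus\{i,j\})\cup\{\bar i,\bar j\}$ is a complementary basis. Then $$\dim\big(\mathcal C(B\setminus\{i\})\cap\mathcal C(B')\big)=n-1\iff D_{i\bar i}=0\ \text{ and }\ D_{j\bar i}<0 .$$
   Context: Let $M\in\mathbb R^{n\times n}$ and $A=[\,I\;\;-M\,]\in\mathbb R^{n\times 2n}$, with columns indexed by $\{1,\dots,2n\}$; for $J\subseteq\{1,\dots,2n\}$, $A_{\cdot J}$ denotes the submatrix of columns indexed by $J$. For $i\in\{1,\dots,2n\}$ the complementary index is $\bar i=i+n$ if $i\le n$ and $\bar i=i-n$ if $i>n$. A set $J$ is complementary if $i\in J$ implies $\bar i\notin J$. A complementary basis is a complementary set $B$ with $|B|=n$ and $A_{\cdot B}$ invertible; $N=\{1,\dots,2n\}\setminus B$. For a complementary set $J$, the complementary cone is $\mathcal C(J)=\{A_{\cdot J}\lambda:\lambda\ge 0\}$. For a complementary basis $B$, let $\beta=A_{\cdot B}^{-1}$ with rows indexed by $B$ (so $\beta_k A_{\cdot k'}=1$ if $k=k'$ and $0$ otherwise, for $k,k'\in B$); the dictionary of $B$ is $D=-\beta A_{\cdot N}$, with rows indexed by $B$ and columns indexed by $N$. The dimension of a convex set is the dimension of its affine hull. $M$ is column sufficient if $[z_i(Mz)_i\le 0\ \forall i]\Rightarrow[z_i(Mz)_i=0\ \forall i]$; row sufficient if $M^T$ is column sufficient; sufficient if both.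 *)

(* Defs.v *)
(* Real matrices are taken over an arbitrary realFieldType R
   (the paper's R^{n x n} is the instance R = reals; every notion involved is
   order-algebraic). Vectors of R^n are column vectors 'cV[R]_n; the column
   index set {1,...,2n} is 'I_(n + n) (0-based: columns 0..n-1 = I, n..2n-1 = -M). *)
From HB Require Import structures.
From mathcomp Require Import all_boot all_order all_algebra.
Set Implicit Arguments. Unset Strict Implicit. Unset Printing Implicit Defensive.
Import Order.TTheory GRing.Theory Num.Theory.
Local Open Scope ring_scope.

Section LCP.
Variable R : realFieldType.
Variable n : nat.

Definition Amat (M : 'M[R]_n) : 'M[R]_(n, n + n) := row_mx 1%:M (- M).

(* complementary index: i <-> i + n *)
Definition cmp (i : 'I_(n + n)) : 'I_(n + n) :=
  match split i with inl a => rshift n a | inr b => lshift n b end.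

Definition complementary (J : {set 'I_(n + n)}) : Prop :=
  forall i, i \in J -> cmp i \notin J.

Definition colidx (B : {set 'I_(n + n)}) (h : #|B| = n) (t : 'I_n) : 'I_(n + n) :=
  enum_val (cast_ord (esym h) t).

Definition ABmat (M : 'M[R]_n) (B : {set 'I_(n + n)}) (h : #|B| = n) : 'M[R]_n :=
  \matrix_(r < n, t < n) Amat M r (colidx h t).

Definition is_cbasis (M : 'M[R]_n) (B : {set 'I_(n + n)}) : Prop :=
  complementary B /\ exists h : #|B| = n, ABmat M h \in unitmx.

(* beta = A_{.B}^{-1}; its row indexed by k \in B *)
Definition beta (M : 'M[R]_n) (B : {set 'I_(n + n)}) (h : #|B| = n) : 'M[R]_n :=
  invmx (ABmat M h).

Definition betarow (M : 'M[R]_n) (B : {set 'I_(n + n)}) (h : #|B| = n)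
  (k : 'I_(n + n)) : 'rV[R]_n :=
  \sum_(t < n | colidx h t == k) row t (beta M h).

Definition dict (M : 'M[R]_n) (B : {set 'I_(n + n)}) (h : #|B| = n)
  (k l : 'I_(n + n)) : R :=
  - (betarow M h k *m col l (Amat M)) 0 0.

Definition ccone (M : 'M[R]_n) (J : {set 'I_(n + n)}) (x : 'cV[R]_n) : Prop :=
  exists lam : 'I_(n + n) -> R, (forall k, 0 <= lam k) /\
    x = \sum_(k in J) lam k *: col k (Amat M).

(* dimension of a convex set = dimension of its affine hull:
   S contains d+1 affinely independent points *)
Definition affdim_ge (S : 'cV[R]_n -> Prop) (d : nat) : Prop :=
  exists p : 'I_d.+1 -> 'cV[R]_n, (forall t, S (p t)) /\
    row_free (\matrix_(t < d, r < n) (p (lift ord0 t) r 0 - p ord0 r 0)).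

Definition aff_dim_eq (S : 'cV[R]_n -> Prop) (d : nat) : Prop :=
  affdim_ge S d /\ ~ affdim_ge S d.+1.

Definition col_sufficient (M : 'M[R]_n) : Prop :=
  forall z : 'cV[R]_n,
    (forall i, z i 0 * (M *m z) i 0 <= 0) -> forall i, z i 0 * (M *m z) i 0 = 0.

Definition row_sufficient (M : 'M[R]_n) : Prop := col_sufficient M^T.

Definition sufficient (M : 'M[R]_n) : Prop := col_sufficient M /\ row_sufficient M.

End LCP.

(* Main.v *)
Require Import Defs.
From HB Require Import structures.
From mathcomp Require Import all_boot all_order all_algebra.
Set Implicit Arguments. Unset Strict Implicit. Unset Printing Implicit Defensive.
Import Order.TTheory GRing.Theory Num.Theory.
Local Open Scope ring_scope.

Lemma colidx_inj (n : nat) (B : {set 'I_(n + n)}) (h : #|B| = n) : injective (colidx h).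
Proof. by move=> s t /enum_val_inj /cast_ord_inj. Qed.

Lemma colidx_in (n : nat) (B : {set 'I_(n + n)}) (h : #|B| = n) t : colidx h t \in B.
Proof. exact: enum_valP. Qed.

Lemma colidx_surj (n : nat) (B : {set 'I_(n + n)}) (h : #|B| = n) k :
  k \in B -> exists t, colidx h t = k.
Proof.
move=> kB; exists (cast_ord h (enum_rank_in kB k)).
by rewrite /colidx cast_ordK enum_rankK_in.
Qed.

Lemma mul_sum_col (R : fieldType) m p (A : 'M[R]_(m, p)) (v : 'cV[R]_p) :
  A *m v = \sum_k v k 0 *: col k A.
Proof.
apply/matrixP => r c; rewrite !mxE summxE; apply: eq_bigr => k _.
by rewrite !mxE (ord1 c) mulrC.
Qed.

Lemma cB_colidx (R : realFieldType) n (M : 'M[R]_n) (B : {set 'I_(n + n)}) (h : #|B| = n) t :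
  ABmat M h \in unitmx ->
  beta M h *m col (colidx h t) (Amat M) = col t 1%:M.
Proof.
move=> U.
have -> : col (colidx h t) (Amat M) = ABmat M h *m col t 1%:M.
  apply/matrixP => r c; rewrite mul_sum_col summxE (bigD1 t) //= big1.
    by rewrite !mxE eqxx addr0 mul1r.
  by move=> k /negbTE kt; rewrite !mxE kt mul0r.
by rewrite mulmxA /beta mulVmx // mul1mx.
Qed.

Lemma cB_in (R : realFieldType) n (M : 'M[R]_n) (B : {set 'I_(n + n)}) (h : #|B| = n) k s :
  ABmat M h \in unitmx -> k \in B ->
  (beta M h *m col k (Amat M)) s 0 = (k == colidx h s)%:R.
Proof.
move=> U /(colidx_surj h) [t <-]; rewrite cB_colidx // !mxE (inj_eq (@colidx_inj _ _ h)).
by rewrite eq_sym.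
Qed.

Lemma dict_colidx (R : realFieldType) n (M : 'M[R]_n) (B : {set 'I_(n + n)}) (h : #|B| = n) s l :
  dict M h (colidx h s) l = - (beta M h *m col l (Amat M)) s 0.
Proof.
rewrite /dict /betarow (eq_bigl (fun t => t == s)); last first.
  by move=> t; rewrite (inj_eq (@colidx_inj _ _ h)).
by rewrite big_pred1_eq -row_mul mxE.
Qed.

Definition lamB (R : realFieldType) n (B : {set 'I_(n + n)}) (h : #|B| = n) (y : 'cV[R]_n)
  (k : 'I_(n + n)) : R := \sum_(t | colidx h t == k) y t 0.

Lemma ABmat_mul (R : realFieldType) n (M : 'M[R]_n) (B : {set 'I_(n + n)}) (h : #|B| = n) y :
  ABmat M h *m y = \sum_k lamB h y k *: col k (Amat M).
Proof.
rewrite mul_sum_col (partition_big (colidx h) predT) //=.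
apply: eq_bigr => k _; rewrite /lamB scaler_suml; apply: eq_bigr => t /eqP <-.
congr (_ *: _); apply/matrixP => r c; by rewrite !mxE.
Qed.

Lemma lamB_colidx (R : realFieldType) n (B : {set 'I_(n + n)}) (h : #|B| = n) (y : 'cV[R]_n) s :
  lamB h y (colidx h s) = y s 0.
Proof.
rewrite /lamB (eq_bigl (fun t => t == s)) ?big_pred1_eq //.
by move=> t; rewrite (inj_eq (@colidx_inj _ _ h)).
Qed.

Lemma lamB_notin (R : realFieldType) n (B : {set 'I_(n + n)}) (h : #|B| = n) (y : 'cV[R]_n) k :
  k \notin B -> lamB h y k = 0.
Proof.
move=> kB; rewrite /lamB big_pred0 // => t; apply/negbTE; apply: contra kB => /eqP <-.
exact: colidx_in.
Qed.

Lemma lamB_supp (R : realFieldType) n (B : {set 'I_(n + n)}) (h : #|B| = n) (y : 'cV[R]_n) k :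
  lamB h y k != 0 -> exists t, colidx h t = k /\ y t 0 != 0.
Proof.
move=> nz; case: (boolP (k \in B)) => kB; last by rewrite lamB_notin ?eqxx in nz.
have [t tk] := colidx_surj h kB; exists t; split => //.
by rewrite -tk lamB_colidx in nz.
Qed.

Lemma lamB_ge0 (R : realFieldType) n (B : {set 'I_(n + n)}) (h : #|B| = n) (y : 'cV[R]_n) k :
  (forall t, 0 <= y t 0) -> 0 <= lamB h y k.
Proof. by move=> H; apply: sumr_ge0 => t _. Qed.

Lemma cone_sum (R : realFieldType) n (M : 'M[R]_n) (J : {set 'I_(n + n)}) lam :
  (forall k, 0 <= lam k) -> (forall k, lam k != 0 -> k \in J) ->
  ccone M J (\sum_k lam k *: col k (Amat M)).
Proof.
move=> H0 HJ; exists lam; split => //.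
rewrite [in RHS]big_mkcond /=; apply: eq_bigr => k _.
case: ifP => // kJ; have : lam k == 0 by apply: contraFT kJ => /HJ.
by move/eqP ->; rewrite scale0r.
Qed.

Lemma cone_coord (R : realFieldType) n (M : 'M[R]_n) (B : {set 'I_(n + n)}) (h : #|B| = n) J x :
  ccone M J x -> exists lam : 'I_(n + n) -> R, (forall k, 0 <= lam k) /\ forall s,
    (beta M h *m x) s 0 = \sum_(k in J) lam k * (beta M h *m col k (Amat M)) s 0.
Proof.
move=> [lam [H0 ->]]; exists lam; split => // s.
rewrite mulmx_sumr summxE; apply: eq_bigr => k _; by rewrite -scalemxAr mxE.
Qed.


Lemma dim_bound (R : realFieldType) n (be : 'M[R]_n) k (sel : 'I_k -> 'I_n)
  (S : 'cV[R]_n -> Prop) d :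
  be \in unitmx -> injective sel ->
  (forall x, S x -> forall c, (be *m x) (sel c) 0 = 0) -> affdim_ge S d -> (d + k <= n)%N.
Proof.
move=> U inj HS [p [Hp Hf]].
set X := \matrix_(t < d, r < n) (p (lift ord0 t) r 0 - p ord0 r 0).
set E : 'M[R]_(n, k) := \matrix_(s, c) (s == sel c)%:R.
have XV : X *m (be^T *m E) = 0.
  apply/matrixP => t c.
  have : (be *m (p (lift ord0 t) - p ord0)) (sel c) 0 = 0.
    by rewrite mulmxBr mxE (HS _ (Hp _)) mxE (HS _ (Hp _)) subr0.
  move=> e; rewrite [RHS]mxE; apply: (etrans _ e); rewrite !mxE; apply: eq_bigr => s _; rewrite !mxE.
  rewrite (bigD1 (sel c)) //= big1 => [|s' /negbTE ns]; last by rewrite !mxE ns mulr0.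
  by rewrite !mxE eqxx mulr1 addr0 mulrC.
have rV : \rank (be^T *m E) = k.
  rewrite -mxrank_tr trmx_mul trmxK mxrankMfree ?row_free_unit //.
  have EE : E^T *m E = 1%:M.
    apply/matrixP => c c'; rewrite !mxE (bigD1 (sel c)) //= big1.
      by rewrite !mxE eqxx mul1r addr0 eq_sym (inj_eq inj) eq_sym.
    by move=> s /negbTE ns; rewrite !mxE ns mul0r.
  apply/eqP; rewrite eqn_leq rank_leq_row /=.
  by rewrite -{1}(mxrank1 R k) -EE mxrankM_maxl.
have := mxrank_mul_min X (be^T *m E).
by rewrite XV mxrank0 rV (eqP Hf) leqn0 subn_eq0.
Qed.


Lemma cmp_lshift n (r : 'I_n) : cmp (lshift n r) = rshift n r.
Proof. by rewrite /cmp -[lshift n r]/(unsplit (inl r)) unsplitK. Qed.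

Lemma cmp_rshift n (r : 'I_n) : cmp (rshift n r) = lshift n r.
Proof. by rewrite /cmp -[rshift n r]/(unsplit (inr r)) unsplitK. Qed.

Lemma cmpK n : involutive (@cmp n).
Proof.
move=> k; rewrite -[k]splitK; case: (split k) => r /=.
  by rewrite cmp_lshift cmp_rshift.
by rewrite cmp_rshift cmp_lshift.
Qed.

Lemma cmp_inj n : injective (@cmp n).
Proof. exact: inv_inj (@cmpK n). Qed.

Lemma suff_pair (R : realFieldType) n (M : 'M[R]_n) (B : {set 'I_(n + n)}) (h : #|B| = n)
  ti tj (z1 z2 : R) :
  col_sufficient M -> complementary B -> ABmat M h \in unitmx -> ti != tj ->
  let i := colidx h ti in let j := colidx h tj in
  let y := z1 *: (beta M h *m col (cmp i) (Amat M)) + z2 *: (beta M h *m col (cmp j) (Amat M)) in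
  0 <= z1 * y ti 0 -> 0 <= z2 * y tj 0 -> z2 * y tj 0 = 0.
Proof.
move=> CS CB U titj i j y H1 H2.
set A := Amat M.
set c := z1 *: col (cmp i) A + z2 *: col (cmp j) A.
have yc : y = beta M h *m c by rewrite /y /c mulmxDr !scalemxAr.
have iB : i \in B by apply: colidx_in.
have jB : j \in B by apply: colidx_in.
have ij : i != j by rewrite (inj_eq (@colidx_inj _ _ h)).
have ciB : cmp i \notin B by apply: CB.
have cjB : cmp j \notin B by apply: CB.
have cij : cmp i != cmp j by rewrite (inj_eq (@cmp_inj _)).
set xf := fun k => (if k == cmp i then z1 else 0) + (if k == cmp j then z2 else 0) - lamB h y k.
set xcol : 'cV[R]_(n + n) := \col_k xf k.
have Ax : A *m xcol = 0.
  rewrite mul_sum_col.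
  have -> : \sum_k xcol k 0 *: col k A =
     \sum_k (if k == cmp i then z1 else 0) *: col k A +
     \sum_k (if k == cmp j then z2 else 0) *: col k A - \sum_k lamB h y k *: col k A.
    rewrite -big_split -sumrB; apply: eq_bigr => k _.
    by rewrite mxE /xf scalerBl scalerDl.
  rewrite -ABmat_mul yc mulmxA /beta mulmxV // mul1mx /c.
  rewrite (bigD1 (cmp i)) //= eqxx big1 => [|k /negbTE -> ]; last by rewrite scale0r.
  rewrite (bigD1 (cmp j)) //= eqxx big1 => [|k /negbTE -> ]; last by rewrite scale0r.
  by rewrite !addr0 subrr.
have wz : usubmx xcol = M *m dsubmx xcol.
  move: Ax; rewrite -{1}[xcol]vsubmxK /A /Amat mul_row_col mul1mx mulNmx.
  by move/eqP; rewrite subr_eq0 => /eqP.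
have xnot : forall k, k \notin B -> k != cmp i -> k != cmp j -> xf k = 0.
  by move=> k kB ki kj; rewrite /xf (negbTE ki) (negbTE kj) lamB_notin // addr0 subrr.
have xci : xf (cmp i) = z1.
  by rewrite /xf eqxx (negbTE cij) lamB_notin // addr0 subr0.
have xcj : xf (cmp j) = z2.
  by rewrite /xf eqxx eq_sym (negbTE cij) lamB_notin // add0r subr0.
have xi : xf i = - y ti 0.
  rewrite /xf.
  have -> : (i == cmp i) = false by apply: contraNF ciB => /eqP <-.
  have -> : (i == cmp j) = false by apply: contraNF cjB => /eqP <-.
  by rewrite /xf lamB_colidx add0r sub0r.
have xj : xf j = - y tj 0.
  rewrite /xf.
  have -> : (j == cmp i) = false by apply: contraNF ciB => /eqP <-.
  have -> : (j == cmp j) = false by apply: contraNF cjB => /eqP <-.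
  by rewrite /xf lamB_colidx add0r sub0r.
have pair : forall p, xf p * xf (cmp p) <= 0.
  move=> p.
  have [->|pi] := eqVneq p i; first by rewrite xi xci mulNr oppr_le0 mulrC.
  have [->|pj] := eqVneq p j; first by rewrite xj xcj mulNr oppr_le0 mulrC.
  have [->|pci] := eqVneq p (cmp i); first by rewrite cmpK xi xci mulrN oppr_le0.
  have [->|pcj] := eqVneq p (cmp j); first by rewrite cmpK xj xcj mulrN oppr_le0.
  case: (boolP (p \in B)) => pB.
    rewrite (xnot (cmp p)) ?mulr0 //; first exact: CB.
      by rewrite (inj_eq (@cmp_inj _)).
    by rewrite (inj_eq (@cmp_inj _)).
  by rewrite xnot // mul0r.
have CS' := CS (dsubmx xcol).
rewrite -wz in CS'.
have Z : forall r, xf (rshift n r) * xf (lshift n r) = 0.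
  move=> r; have := CS' _ r; rewrite !mxE; apply => r'; rewrite !mxE.
  by rewrite -cmp_lshift mulrC pair.
have := erefl j; rewrite -{1}[j]splitK; case: (split j) => r /= jr.
  by have := Z r; rewrite -cmp_lshift jr xcj xj mulrN => /eqP; rewrite oppr_eq0 => /eqP.
by have := Z r; rewrite -cmp_rshift jr xcj xj mulNr => /eqP; rewrite oppr_eq0 mulrC => /eqP.
Qed.


Lemma F1 (R : realFieldType) n (M : 'M[R]_n) (B : {set 'I_(n + n)}) (h : #|B| = n) ti x :
  ABmat M h \in unitmx -> ccone M (B :\ colidx h ti) x ->
  (beta M h *m x) ti 0 = 0 /\ forall s, 0 <= (beta M h *m x) s 0.
Proof.
move=> U /(cone_coord h) [lam [H0 E]]; split => [|s]; rewrite E.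
  apply: big1 => k; rewrite in_setD1 => /andP [kn kB].
  by rewrite cB_in // (negbTE kn) mulr0.
apply: sumr_ge0 => k; rewrite in_setD1 => /andP [_ kB].
by rewrite cB_in // mulr_ge0 ?ler0n.
Qed.

Lemma F2 (R : realFieldType) n (M : 'M[R]_n) (B : {set 'I_(n + n)}) (h : #|B| = n) ti tj x :
  ABmat M h \in unitmx -> complementary B -> ti != tj ->
  let i := colidx h ti in let j := colidx h tj in
  ccone M ((B :\: [set i; j]) :|: [set cmp i; cmp j]) x ->
  exists mu nu : R, 0 <= mu /\ 0 <= nu /\ forall s, (s == ti) || (s == tj) ->
    (beta M h *m x) s 0 = mu * (beta M h *m col (cmp i) (Amat M)) s 0
                         + nu * (beta M h *m col (cmp j) (Amat M)) s 0.
Proof.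
move=> U CB titj i j /(cone_coord h) [lam [H0 E]].
have cij : cmp i != cmp j by rewrite (inj_eq (@cmp_inj _)) (inj_eq (@colidx_inj _ _ h)).
exists (lam (cmp i)), (lam (cmp j)); do 2!split => //.
move=> s hs; rewrite E (bigD1 (cmp i)); last by rewrite !inE eqxx orbT.
rewrite (bigD1 (cmp j)) /=; last by rewrite !inE eqxx !orbT eq_sym.
rewrite addrA big1 ?addr0 // => k /andP [/andP [kB' kci] kcj].
move: kB'; rewrite !inE (negbTE kci) (negbTE kcj) orbF orbF => /andP [/norP [ki kj] kB].
rewrite cB_in //; case/orP: hs => /eqP ->.
  by rewrite (negbTE ki) mulr0.
by rewrite (negbTE kj) mulr0.
Qed.

Lemma cone_Bi (R : realFieldType) n (M : 'M[R]_n) (B : {set 'I_(n + n)}) (h : #|B| = n) ti (y : 'cV[R]_n) :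
  (forall s, 0 <= y s 0) -> y ti 0 = 0 -> ccone M (B :\ colidx h ti) (ABmat M h *m y).
Proof.
move=> H0 Hti; rewrite ABmat_mul; apply: cone_sum => k; first exact: lamB_ge0.
move=> /lamB_supp [t [<- yt]]; rewrite in_setD1 colidx_in andbT (inj_eq (@colidx_inj _ _ h)).
by apply: contraNneq yt => ->; rewrite Hti.
Qed.

Lemma cone_B' (R : realFieldType) n (M : 'M[R]_n) (B : {set 'I_(n + n)}) (h : #|B| = n) ti tj (y : 'cV[R]_n) (mu : R) :
  ABmat M h \in unitmx ->
  let i := colidx h ti in let j := colidx h tj in
  0 <= mu -> (forall s, 0 <= y s 0) -> (forall s, y s 0 != 0 -> (s != ti) && (s != tj)) ->
  ccone M ((B :\: [set i; j]) :|: [set cmp i; cmp j]) (mu *: col (cmp i) (Amat M) + ABmat M h *m y).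
Proof.
move=> U i j mu0 H0 Hs.
have -> : mu *: col (cmp i) (Amat M) = \sum_k ((k == cmp i)%:R * mu) *: col k (Amat M).
  rewrite (bigD1 (cmp i)) //= eqxx mul1r big1 ?addr0 // => k /negbTE ->.
  by rewrite mul0r scale0r.
rewrite ABmat_mul -big_split /=.
have -> : forall F G : 'I_(n + n) -> R, \sum_k (F k *: col k (Amat M) + G k *: col k (Amat M))
   = \sum_k (F k + G k) *: col k (Amat M).
  by move=> F G; apply: eq_bigr => k _; rewrite scalerDl.
apply: cone_sum => k.
  by rewrite addr_ge0 ?lamB_ge0 // mulr_ge0 ?ler0n.
have [->|kci] := eqVneq k (cmp i); first by rewrite !inE eqxx orbT.
rewrite mul0r add0r => /lamB_supp [t [<- yt]].
move: (Hs _ yt) => /andP [t1 t2].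
by rewrite /i /j !inE colidx_in !(inj_eq (@colidx_inj _ _ h)) (negbTE t1) (negbTE t2).
Qed.


Lemma addr_norm_ge0 (R : realFieldType) (x : R) : 0 <= x + `|x|.
Proof. by have := ler_norm (- x); rewrite normrN -subr_ge0 opprK addrC. Qed.

Lemma sel2_inj n (ti tj : 'I_n) : ti != tj ->
  injective (fun c : 'I_2 => if c == ord0 then ti else tj).
Proof.
move=> titj c c'.
case: c => [[|[|?]] ?] //; case: c' => [[|[|?]] ?] //= e; try apply: val_inj => //.
- by rewrite e eqxx in titj.
- by rewrite e eqxx in titj.
Qed.

Lemma addmx_entry (R : realFieldType) m p (A C : 'M[R]_(m, p)) r c : (A + C) r c = A r c + C r c.
Proof. by rewrite mxE. Qed.

Lemma col1_entry (R : realFieldType) m (t s : 'I_m) : (col t (1%:M : 'M[R]_m)) s 0 = (s == t)%:R.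
Proof. by rewrite !mxE. Qed.

Lemma zeromx_entry (R : realFieldType) m p r c : (0 : 'M[R]_(m, p)) r c = 0.
Proof. by rewrite mxE. Qed.

Theorem mainTheorem3 (R : realFieldType) (n : nat) (M : 'M[R]_n)
  (B : {set 'I_(n + n)}) (h : #|B| = n) (i j : 'I_(n + n)) :
  sufficient M ->
  complementary B -> ABmat M h \in unitmx ->
  i \in B -> j \in B -> i != j ->
  is_cbasis M ((B :\: [set i; j]) :|: [set cmp i; cmp j]) ->
  aff_dim_eq (fun x => ccone M (B :\ i) x /\
                       ccone M ((B :\: [set i; j]) :|: [set cmp i; cmp j]) x)
             (n - 1)%N
  <-> (dict M h i (cmp i) = 0 /\ dict M h j (cmp i) < 0).
Proof.
move=> [CS _] CB U iB jB ij _.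
have [ti Ei] := colidx_surj h iB; have [tj Ej] := colidx_surj h jB.
subst i j.
have titj : ti != tj by apply: contraNneq ij => ->.
have n0 : (0 < n)%N := leq_ltn_trans (leq0n ti) (ltn_ord ti).
have Ub : beta M h \in unitmx by rewrite unitmx_inv.
set i := colidx h ti; set j := colidx h tj.
set S := fun x => _ /\ _.
set a := beta M h *m col (cmp i) (Amat M).
have Da : dict M h i (cmp i) = - a ti 0 by rewrite dict_colidx.
have Db : dict M h j (cmp i) = - a tj 0 by rewrite dict_colidx.
rewrite Da Db oppr_lt0.
have notn : ~ affdim_ge S (n - 1).+1.
  move=> Hd.
  have sinj : injective (fun _ : 'I_1 => ti) by move=> c c' _; rewrite (ord1 c) (ord1 c').
  suff HS : forall x, S x -> forall c : 'I_1, (beta M h *m x) ((fun _ : 'I_1 => ti) c) 0 = 0.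
    by have := dim_bound Ub sinj HS Hd; rewrite subn1 prednK // addn1 ltnn.
  by move=> x [Cx _] c; case: (F1 U Cx).
split.
- move=> [Hge _].
  case: (boolP ((a ti 0 == 0) && (0 < a tj 0))) => [/andP [/eqP -> ->] |Hno]; first by rewrite oppr0.
  exfalso.
  have H2 : forall x, S x -> forall c : 'I_2,
      (beta M h *m x) ((fun c : 'I_2 => if c == ord0 then ti else tj) c) 0 = 0.
    move=> x [Cx C'x] c.
    have [Hti Hge0] := F1 U Cx.
    have [mu [nu [mu0 [nu0 Hmn]]]] := F2 U CB titj C'x.
    suff Htj : (beta M h *m x) tj 0 = 0 by case: (c == ord0).
    have := suff_pair (z1 := mu) (z2 := nu) CS CB U titj.
    have Ey : forall s, (s == ti) || (s == tj) ->
      (mu *: (beta M h *m col (cmp i) (Amat M)) + nu *: (beta M h *m col (cmp j) (Amat M))) s 0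
      = (beta M h *m x) s 0.
      move=> s hs; rewrite Hmn //.
      by rewrite [X in X = _]mxE; congr (_ + _); rewrite [LHS]mxE.
    rewrite /= (Ey ti) ?eqxx // (Ey tj) ?eqxx ?orbT // Hti mulr0.
    move=> /(_ (lexx _) (mulr_ge0 nu0 (Hge0 tj))) /eqP; rewrite mulf_eq0.
    case/orP => [/eqP nu_0|/eqP //].
    have [//|ytj] := eqVneq ((beta M h *m x) tj 0) 0; move/negP: Hno; case.
    have Eti := Hmn ti; rewrite eqxx Hti nu_0 mul0r addr0 /= in Eti.
    have Etj := Hmn tj; rewrite eqxx orbT nu_0 mul0r addr0 in Etj.
    have {}Eti := Eti isT; have {}Etj := Etj isT.
    have mun : mu != 0 by apply: contraNneq ytj => mu_0; rewrite Etj mu_0 mul0r.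
    have mup : 0 < mu by rewrite lt_def mun mu0.
    have ypos : 0 < (beta M h *m x) tj 0 by rewrite lt_def ytj Hge0.
    rewrite Etj pmulr_rgt0 // in ypos.
    rewrite ypos andbT.
    by move/esym/eqP: Eti; rewrite mulf_eq0 (negbTE mun).
  have := dim_bound Ub (sel2_inj titj) H2 Hge.
  by rewrite subn1 addn2 prednK // ltnn.
- case=> /eqP; rewrite oppr_eq0 => /eqP ai aj.
  split; last exact: notn.
  rewrite subn1.
  have [t0 Et0 _] := unlift_some titj.
  set cv : 'cV[R]_n := \col_s (if (s != ti) && (s != tj) then `|a s 0| else 0).
  set yv := fun t : 'I_n.-1 => if t == t0 then a + cv else col (lift ti t) (1%:M : 'M[R]_n).
  have cvE : forall s, cv s 0 = if (s != ti) && (s != tj) then `|a s 0| else 0.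
    by move=> s; rewrite mxE.
  have cv0 : forall s, 0 <= cv s 0.
    by move=> s; rewrite mxE; case: ifP => // _; apply: normr_ge0.
  exists (fun u => if unlift ord0 u is Some t then ABmat M h *m yv t else 0); split.
  + move=> u; case: (unlift ord0 u) => [t|]; last first.
      by split; exists (fun _ => 0); split => //; rewrite big1 // => k _; rewrite scale0r.
    rewrite /yv; case: eqP => [_|tt0].
    * split.
      - apply: cone_Bi => [s|]; last by rewrite addmx_entry cvE eqxx /= addr0 ai.
        rewrite addmx_entry cvE; case: ifP => [_|/negbT]; first exact: addr_norm_ge0.
        rewrite negb_and !negbK => /orP [/eqP->|/eqP->]; rewrite addr0 ?ai //.
        exact: ltW.
      - have -> : ABmat M h *m (a + cv) = 1 *: col (cmp i) (Amat M) + ABmat M h *m cv.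
          by rewrite mulmxDr /a mulmxA /beta mulmxV // mul1mx scale1r.
        apply: cone_B' => //.
        by move=> s; rewrite cvE; case: ifP => //; rewrite eqxx.
    * split.
      - apply: cone_Bi => [s|]; rewrite !mxE ?ler0n //.
        by rewrite (negbTE (neq_lift ti t)).
      - rewrite -[ABmat M h *m _]add0r -(scale0r (col (cmp i) (Amat M))).
        apply: cone_B' => //; first by move=> s; rewrite !mxE ler0n.
        move=> s; rewrite !mxE; case: (eqVneq s (lift ti t)) => [-> _|ne]; last by rewrite eqxx.
        rewrite eq_sym neq_lift /= Et0 (inj_eq (@lift_inj _ ti)).
        by apply/eqP.
  + apply: inj_row_free => u Hu.
    have Hw : \sum_t u 0 t *: yv t = 0.
      have H0 : \sum_t u 0 t *: (ABmat M h *m yv t) = 0.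
        apply/matrixP => r c; rewrite (ord1 c).
        have e := congr1 (fun m : 'M[R]_(1, n) => m 0 r) Hu; rewrite /= [RHS]mxE in e.
        rewrite [RHS]mxE; apply: (etrans _ e); rewrite summxE mxE; apply: eq_bigr => t _.
        rewrite [LHS]mxE [in RHS]mxE liftK unlift_none.
        by rewrite zeromx_entry subr0.
      have e := congr1 (mulmx (beta M h)) H0; rewrite mulmx0 mulmx_sumr in e.
      apply: (etrans _ e); apply: eq_bigr => t _; by rewrite -scalemxAr mulmxA /beta mulVmx // mul1mx.
    have ut0 : u 0 t0 = 0.
      have := congr1 (fun m : 'cV[R]_n => m tj 0) Hw; rewrite summxE (bigD1 t0) //= big1.
        rewrite mxE /yv eqxx addmx_entry cvE eqxx andbF addr0 zeromx_entry addr0.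
        by move/eqP; rewrite mulf_eq0 (gt_eqF aj) orbF => /eqP.
      move=> t tt0; rewrite mxE /yv (negbTE tt0) !mxE Et0 (inj_eq (@lift_inj _ ti)).
      by rewrite eq_sym (negbTE tt0) mulr0.
    apply/matrixP => o t; rewrite (ord1 o) [RHS]mxE.
    have [->|tt0] := eqVneq t t0; first done.
    have := congr1 (fun m : 'cV[R]_n => m (lift ti t) 0) Hw; rewrite summxE (bigD1 t) //= big1.
      by rewrite mxE /yv (negbTE tt0) !mxE eqxx mulr1 addr0.
    move=> t' tt'; rewrite mxE /yv; case: eqP => [->|_]; first by rewrite ut0 mul0r.
    by rewrite !mxE (inj_eq (@lift_inj _ ti)) eq_sym (negbTE tt') mulr0.
Qed.
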